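(* Let $s\in\{1,2\}$ and let $C^s=\{L^s_{a_0,b_0},\dots,L^s_{a_4,b_4}\}\subset\mathcal{L}^s$ be a set of pairwise disjoint lines on ${\rm F}_5$ with $\#C^s=5$. If $\#\{a_0,\dots,a_4\}\le3$, then $\#\psi_5(C^s)\ge3$.
   Context: ${\rm F}_5\subset\mathbb{P}^3(\mathbb{C})$ is the surface $x^5-y^5-z^5+w^5=0$. Let $\eta$ be a primitive 5th root of unity and $v=-1$. For $k,i\in\{0,\dots,4\}$ define $L^1_{k,i}:\{x=\eta^{k+i}z,\ y=\eta^i w\}$, $L^2_{k,i}:\{x=v\eta^i w,\ y=v\eta^{k+i}z\}$, and $\mathcal{L}^s=\{L^s_{k,i}\}_{k,i}$. Define $\psi_5(k,i)=r_5(k+2i)$ with $r_5$ the remainder modulo 5, and $\psi_5(X)$ the set of values $\psi_5(k,i)$ over the lines $L^s_{k,i}\in X$. *)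

(* Defs.v *)
From mathcomp Require Import all_boot all_order all_algebra all_field.
Set Implicit Arguments. Unset Strict Implicit. Unset Printing Implicit Defensive.
Import GRing.Theory Num.Theory.
Local Open Scope ring_scope.

(* Points of P^3(C) are represented by nonzero vectors (x,y,z,w) in algC^4;
   a line is identified with the set of nonzero vectors satisfying its
   two linear equations.  v = -1. *)
Definition vF5 : algC := -1.

(* on_line eta s k i x y z w : the point [x:y:z:w] lies on L^s_{k,i}.
   s = 1 gives L^1, any other s gives L^2 (only s in {1,2} is used). *)
Definition on_line (eta : algC) (s k i : nat) (x y z w : algC) : Prop :=
  if s == 1%N then x = eta ^+ (k + i) * z /\ y = eta ^+ i * w
  else x = vF5 * eta ^+ i * w /\ y = vF5 * eta ^+ (k + i) * z.

Definition lines_disjoint (eta : algC) (s : nat) (l1 l2 : 'I_5 * 'I_5) : Prop :=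
  forall x y z w : algC, (x, y, z, w) <> (0, 0, 0, 0) ->
    ~ (on_line eta s l1.1 l1.2 x y z w /\ on_line eta s l2.1 l2.2 x y z w).

Definition psi5 (l : 'I_5 * 'I_5) : 'I_5 := inord ((l.1 + 2 * l.2) %% 5).

(* Main.v *)
Require Import Defs.
From mathcomp Require Import all_boot all_order all_algebra all_field.
Import GRing.Theory Num.Theory.
Local Open Scope ring_scope.

Definition brute_b := all (fun a0 => all (fun a1 => all (fun a2 => all (fun a3 => all (fun a4 =>
  ~~ uniq [:: (a0 + 0) %% 5; (a1 + 1) %% 5; (a2 + 2) %% 5; (a3 + 3) %% 5; (a4 + 4) %% 5]
  || (3 < size (undup [:: a0; a1; a2; a3; a4]))
  || (3 <= size (undup [:: (a0 + 2 * 0) %% 5; (a1 + 2 * 1) %% 5; (a2 + 2 * 2) %% 5; (a3 + 2 * 3) %% 5; (a4 + 2 * 4) %% 5])))%N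
  (iota 0 5)) (iota 0 5)) (iota 0 5)) (iota 0 5)) (iota 0 5).
Lemma brute : brute_b. Proof. vm_compute. reflexivity. Qed.

Lemma card_img (g : 'I_5 -> 'I_5) :
  #|[set g i | i : 'I_5]| = size (undup [seq val (g (inord n)) | n <- iota 0 5]).
Proof.
rewrite -val_enum_ord -map_comp.
rewrite (@eq_map _ _ _ (fun i : 'I_5 => val (g i))); last by move=> i /=; rewrite inord_val.
rewrite (map_comp val g) undup_map_inj ?size_map; last exact: val_inj.
rewrite -(card_uniqP (undup_uniq _)); apply: eq_card => x.
rewrite mem_undup; apply/imsetP/mapP => [[i _ ->]|[i _ ->]]; exists i => //.
by rewrite mem_enum.
Qed.

Lemma brute2 (a : nat -> nat) : (forall n, n < 5 -> a n < 5)%N ->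
  uniq [seq ((a n + n) %% 5)%N | n <- iota 0 5] ->
  (size (undup [seq a n | n <- iota 0 5]) <= 3)%N ->
  (3 <= size (undup [seq ((a n + 2 * n) %% 5)%N | n <- iota 0 5]))%N.
Proof.
move=> ha U K.
have := brute; rewrite /brute_b.
have I : forall n, (n < 5)%N -> a n \in iota 0 5 by move=> n /ha; rewrite mem_iota.
move=> /allP H; move: {H} (H _ (I 0%N isT)).
move=> /allP H; move: {H} (H _ (I 1%N isT)).
move=> /allP H; move: {H} (H _ (I 2%N isT)).
move=> /allP H; move: {H} (H _ (I 3%N isT)).
move=> /allP H; move: {H} (H _ (I 4%N isT)).
have K' : (size (undup [:: a 0; a 1; a 2; a 3; a 4]) <= 3)%N := K.
case/orP => [/orP[H|H]|H].
- by case/negP: H; exact: U.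
- by rewrite ltnNge K' in H.
- exact: H.
Qed.

Lemma enum5 : enum 'I_5 = map (fun n => inord n) (iota 0 5).
Proof.
apply: (inj_map val_inj); rewrite val_enum_ord -map_comp.
rewrite -[LHS]map_id; apply/eq_in_map => n; rewrite mem_iota /= => /inordK //.
Qed.

Lemma comb (f : 'I_5 -> 'I_5) :
  injective (fun i : 'I_5 => ((f i + i) %% 5)%N) ->
  (#|[set f i | i : 'I_5]| <= 3)%N ->
  (3 <= #|[set psi5 (f i, i) | i : 'I_5]|)%N.
Proof.
move=> inj; rewrite !card_img.
have U : uniq [seq ((f i + i) %% 5)%N | i <- enum 'I_5].
  by rewrite map_inj_uniq // enum_uniq.
move: U; rewrite enum5 -map_comp => U K.
have ha : forall n, (n < 5)%N -> (val (f (inord n)) < 5)%N by move=> n _; exact: ltn_ord.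
have U' : uniq [seq ((val (f (inord n)) + n) %% 5)%N | n <- iota 0 5].
  move: U; congr (uniq _); apply/eq_in_map => n; rewrite mem_iota /= => nl.
  by rewrite inordK.
have := @brute2 _ ha U' K; congr (_ <= _)%N; congr (size (undup _)).
apply/eq_in_map => n; rewrite mem_iota /= => nl.
by rewrite /psi5 /= inordK ?ltn_pmod // inordK.
Qed.

Theorem lemma3p4 (eta : algC) (s : nat) (C : {set 'I_5 * 'I_5}) :
  5.-primitive_root eta ->
  (s == 1%N) || (s == 2%N) ->
  #|C| = 5%N ->
  {in C &, forall l1 l2, l1 != l2 -> lines_disjoint eta s l1 l2} ->
  (#|[set l.1 | l in C]| <= 3)%N ->
  (3 <= #|[set psi5 l | l in C]|)%N.
Proof.
move=> prim _ hC hdisj h1.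
have nz : forall a b c : algC, (a, b, c, (1 : algC)) <> ((0 : algC), (0 : algC), (0 : algC), (0 : algC)).
  by move=> a b c H; move: (congr1 (fun t => t.2) H) => /= /eqP; rewrite oner_eq0.
have nz' : forall a b d : algC, (a, b, (1 : algC), d) <> ((0 : algC), (0 : algC), (0 : algC), (0 : algC)).
  by move=> a b d H; move: (congr1 (fun t => t.1.2) H) => /= /eqP; rewrite oner_eq0.
have Hsnd : {in C &, forall l1 l2 : 'I_5 * 'I_5, l1.2 = l2.2 -> l1 = l2}.
  move=> l1 l2 L1 L2 e; apply/eqP; apply/negPn/negP => ne.
  have := hdisj _ _ L1 L2 ne; rewrite /lines_disjoint /on_line.
  case: (s == 1%N).
  - move/(_ 0 (eta ^+ l1.2) 0 1 (nz _ _ _)); apply.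
    by rewrite e !mulr0 mulr1.
  - move/(_ (- eta ^+ l1.2) 0 0 1 (nz _ _ _)); apply.
    by rewrite /vF5 e !mulr0 mulr1 mulN1r.
have Hsum : {in C &, forall l1 l2 : 'I_5 * 'I_5,
    ((l1.1 + l1.2) %% 5 = (l2.1 + l2.2) %% 5)%N -> l1 = l2}.
  move=> l1 l2 L1 L2 e; apply/eqP; apply/negPn/negP => ne.
  have ee : eta ^+ (l1.1 + l1.2) = eta ^+ (l2.1 + l2.2).
    by rewrite -(prim_expr_mod prim) e prim_expr_mod.
  have := hdisj _ _ L1 L2 ne; rewrite /lines_disjoint /on_line.
  case: (s == 1%N).
  - move/(_ (eta ^+ (l1.1 + l1.2)) 0 1 0 (nz' _ _ _)); apply.
    by rewrite ee !mulr0 mulr1.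
  - move/(_ 0 (- eta ^+ (l1.1 + l1.2)) 1 0 (nz' _ _ _)); apply.
    by rewrite /vF5 ee !mulr0 mulr1 mulN1r.
have Hsurj : forall i : 'I_5, exists2 l, l \in C & l.2 = i.
  have c5 : #|[set l.2 | l in C]| = 5%N.
    by rewrite card_in_imset // => l1 l2 L1 L2; exact: Hsnd.
  have sT : [set l.2 | l in C] = setT.
    by apply/eqP; rewrite eqEcard subsetT cardsT card_ord c5.
  move=> i; have : i \in [set l.2 | l in C] by rewrite sT inE.
  by case/imsetP => l lC ->; exists l.
pose f (i : 'I_5) := if [pick l in C | l.2 == i] is Some l then l.1 else i.
have Hf : forall i, (f i, i) \in C.
  move=> i; rewrite /f; case: pickP => [l /andP[lC /eqP <-]|none].
    by case: l lC.
  have [l lC li] := Hsurj i.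
  by have := none l; rewrite lC li eqxx.
have HC : C = [set (f i, i) | i : 'I_5].
  apply/eqP; rewrite eq_sym eqEcard; apply/andP; split.
    by apply/subsetP => x /imsetP [i _ ->].
  by rewrite hC card_imset ?card_ord // => i j [].
rewrite HC -!imset_comp in h1 *.
apply: comb h1 => i j e.
by have := Hsum _ _ (Hf i) (Hf j) e; case.
Qed.
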